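(* Let $H$ be a subgroup of Thompson's group $F$. Assume that for every pair of finite binary words $u$ and $v$, each of which contains both digits $0$ and $1$, there is an element $h\in H$ with the pair of branches $u\rightarrow v$. Then $\mathrm{Cl}(H)$ contains the derived subgroup $[F,F]$.
   Context: Thompson's group $F$ is the group of all piecewise linear homeomorphisms of $[0,1]$ with finitely many breakpoints, all breakpoints dyadic fractions and all slopes integer powers of $2$. For a finite binary word $u$, let $[u]$ denote the dyadic interval $[.u,\,.u111\ldots]$ (numbers whose binary expansion begins with $u$). An element $h\in F$ has the pair of branches $u\rightarrow v$ if $h$ maps $[u]$ linearly onto $[v]$, i.e. $h(.u\alpha)=.v\alpha$ for every infinite binary word $\alpha$. For $H\le F$, the closure $\mathrm{Cl}(H)$ is the subgroup of $F$ consisting of all piecewise-$H$ functions: those $f\in F$ for which there is a finite subdivision of $[0,1]$ into intervals such that on each interval $f$ coincides with some element of $H$. *)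

(* Defs.v *)
From Stdlib Require Import Reals ZArith List.
Open Scope R_scope.

(* Maps R -> R; elements of F are extended by the identity outside [0,1]. *)
Definition fn := R -> R.

Definition dyadic (x : R) : Prop :=
  exists (a : Z) (k : nat), x = IZR a / 2 ^ k.

(* Thompson's group F: piecewise linear homeomorphisms of [0,1] with finitely
   many dyadic breakpoints and slopes integer powers of 2.  A finite subdivision
   0 = p 0 < p 1 < ... < p n = 1 by dyadic points, on each piece f is affine
   with slope 2^(m i); together with f 0 = 0, f 1 = 1 this makes f an
   increasing PL homeomorphism of [0,1]. *)
Definition inF (f : fn) : Prop :=
  (forall x, (x < 0 \/ 1 < x) -> f x = x) /\ f 0 = 0 /\ f 1 = 1 /\
  exists (n : nat) (p : nat -> R) (m : nat -> Z) (b : nat -> R),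
    p 0%nat = 0 /\ p n = 1 /\
    (forall i, (i < n)%nat -> p i < p (S i) /\ dyadic (p i)) /\
    (forall i, (i < n)%nat -> forall x, p i <= x <= p (S i) ->
        f x = powerRZ 2 (m i) * x + b i).

Definition is_inv (g f : fn) : Prop := forall x, g (f x) = x /\ f (g x) = x.

Record subgroupF (H : fn -> Prop) : Prop := {
  sub_F : forall h, H h -> inF h;
  sub_id : H (fun x => x);
  sub_comp : forall a b, H a -> H b -> H (fun x => a (b x));
  sub_inv : forall a b, H a -> is_inv b a -> H b
}.

(* Binary words as lists of booleans (true = digit 1); .u = value of 0.u in base 2 *)
Fixpoint wval (u : list bool) : R :=
  match u with
  | nil => 0
  | d :: u' => ((if d then 1 else 0) + wval u') / 2
  end.

(* [u] = [.u, .u111...] = [.u, .u + 2^-|u|] *)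
Definition in_word (u : list bool) (x : R) : Prop :=
  wval u <= x <= wval u + / 2 ^ length u.

(* h has the pair of branches u -> v: h maps [u] linearly onto [v],
   h(.u alpha) = .v alpha. *)
Definition has_branches (h : fn) (u v : list bool) : Prop :=
  forall x, in_word u x ->
    h x = wval v + (x - wval u) * 2 ^ length u / 2 ^ length v.

Definition has_both_digits (u : list bool) : Prop := In true u /\ In false u.

Definition Cl (H : fn -> Prop) (f : fn) : Prop :=
  inF f /\
  exists (n : nat) (p : nat -> R),
    p 0%nat = 0 /\ p n = 1 /\
    (forall i, (i < n)%nat -> p i < p (S i)) /\
    (forall i, (i < n)%nat -> exists h, H h /\
        forall x, p i <= x <= p (S i) -> f x = h x).

Inductive derivedF : fn -> Prop :=
| dF_comm : forall f g fi gi, inF f -> inF g -> is_inv fi f -> is_inv gi g ->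
    derivedF (fun x => fi (gi (f (g x))))
| dF_id : derivedF (fun x => x)
| dF_comp : forall a b, derivedF a -> derivedF b -> derivedF (fun x => a (b x))
| dF_inv : forall a b, derivedF a -> is_inv b a -> derivedF b.

(* Main.v *)
Require Import Defs.
From Stdlib Require Import Reals ZArith List.
From Stdlib Require Import Lra Lia.
Open Scope R_scope.

Lemma div_le_l a x P : 0 < P -> a <= x * P -> a / P <= x.
Proof. intros HP H. unfold Rdiv. apply (Rmult_le_reg_r P); auto.
  rewrite Rmult_assoc, Rinv_l; lra. Qed.
Lemma div_le_r a x P : 0 < P -> x * P <= a -> x <= a / P.
Proof. intros HP H. unfold Rdiv. apply (Rmult_le_reg_r P); auto.
  rewrite Rmult_assoc, Rinv_l; lra. Qed.
Lemma le_div_l a x P : 0 < P -> a / P <= x -> a <= x * P.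
Proof. intros HP H. replace a with (a / P * P) by (field; lra).
  apply Rmult_le_compat_r; lra. Qed.
Lemma le_div_r a x P : 0 < P -> x <= a / P -> x * P <= a.
Proof. intros HP H. replace a with (a / P * P) by (field; lra).
  apply Rmult_le_compat_r; lra. Qed.

Lemma p2pos k : 0 < 2 ^ k.
Proof. apply pow_lt; lra. Qed.

Lemma IZR_pow2 j : IZR (Z.of_nat (2 ^ j)%nat) = 2 ^ j.
Proof. rewrite <- INR_IZR_INZ, pow_INR. simpl. replace (1+1) with 2 by ring. reflexivity. Qed.

Lemma int_half p q : IZR p <= IZR q + / 2 -> (p <= q)%Z.
Proof. intros H. destruct (Z_le_gt_dec p q); auto.
  assert (IZR (q + 1) <= IZR p) by (apply IZR_le; lia).
  rewrite plus_IZR in H0. lra. Qed.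

Definition Dr (r : R) (K : nat) (x : R) := r / 2 ^ K <= x <= (r + 1) / 2 ^ K.

Lemma mid_nest (c d : Z) (L i : nat) :
  IZR c / 2 ^ L <= (IZR d + / 2) / 2 ^ (L + i) <= (IZR c + 1) / 2 ^ L ->
  forall x, Dr (IZR d) (L + i) x -> Dr (IZR c) L x.
Proof.
  intros [H1 H2] x [H3 H4]. unfold Dr.
  pose proof (p2pos L). pose proof (p2pos i).
  set (C := (c * Z.of_nat (2 ^ i)%nat)%Z).
  assert (EC : IZR C = IZR c * 2 ^ i) by (unfold C; rewrite mult_IZR, IZR_pow2; reflexivity).
  rewrite pow_add in *.
  assert (A1 : IZR C <= IZR d + / 2).
  { rewrite EC. apply le_div_l in H1; auto.
    replace ((IZR d + / 2) / (2 ^ L * 2 ^ i) * 2 ^ L) with ((IZR d + /2) / 2 ^ i) in H1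
      by (field; lra).
    apply le_div_r in H1; auto. }
  assert (A2 : IZR d + / 2 <= IZR (C + Z.of_nat (2^i)%nat)).
  { rewrite plus_IZR, EC, IZR_pow2. apply le_div_r in H2; auto.
    replace ((IZR d + / 2) / (2 ^ L * 2 ^ i) * 2 ^ L) with ((IZR d + /2) / 2 ^ i) in H2
      by (field; lra).
    apply le_div_l in H2; auto. lra. }
  apply int_half in A1. apply IZR_le in A1.
  assert (A3 : (d + 1 <= C + Z.of_nat (2^i)%nat)%Z).
  { apply int_half. rewrite plus_IZR. simpl (IZR 1). lra. }
  apply IZR_le in A3. rewrite !plus_IZR, EC, IZR_pow2 in A3. simpl (IZR 1) in A3.
  rewrite EC in A1.
  split.
  - apply div_le_l; auto. apply le_div_l in H3; [|nra].
    replace (x * 2 ^ L) with (x * (2 ^ L * 2 ^ i) / 2 ^ i) by (field; lra).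
    apply div_le_r; auto. lra.
  - apply div_le_r; auto. apply le_div_r in H4; [|nra].
    replace (x * 2 ^ L) with (x * (2 ^ L * 2 ^ i) / 2 ^ i) by (field; lra).
    apply div_le_l; auto. lra.
Qed.

Lemma cover K x : 0 <= x <= 1 -> exists a, (a < 2 ^ K)%nat /\ Dr (INR a) K x.
Proof.
  intros Hx. induction K as [|K IH].
  - exists 0%nat. split; [simpl; lia|]. unfold Dr. simpl. lra.
  - destruct IH as [a [Ha [H1 H2]]]. pose proof (p2pos K).
    destruct (Rle_lt_dec x ((2 * INR a + 1) / 2 ^ S K)).
    + exists (2 * a)%nat. split; [simpl; lia|]. unfold Dr. rewrite mult_INR. simpl (INR 2).
      simpl pow. simpl pow in r. split. 2:{ replace (1+1) with 2 by ring. lra. }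
      replace ((1+1) * INR a / (2 * 2 ^ K)) with (INR a / 2 ^ K) by (field; lra). lra.
    + exists (2 * a + 1)%nat. split; [simpl; lia|]. unfold Dr. rewrite plus_INR, mult_INR.
      simpl (INR 2). simpl (INR 1). simpl pow. simpl pow in r. split. { replace (1+1) with 2 by ring. lra. }
      replace (((1+1) * INR a + 1 + 1) / (2 * 2 ^ K)) with ((INR a + 1) / 2 ^ K) by (field; lra).
      lra.
Qed.

Lemma word_exists K : forall a, (a < 2 ^ K)%nat ->
  exists u, length u = K /\ wval u = INR a / 2 ^ K.
Proof.
  induction K as [|K IH]; intros a Ha.
  - exists nil. simpl in *. split; auto. assert (a = 0%nat) by lia. subst. simpl. field.
  - pose proof (p2pos K). destruct (Nat.lt_ge_cases a (2 ^ K)).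
    + destruct (IH a H0) as [u [Hl Hw]]. exists (false :: u). simpl. split; [lia|].
      rewrite Hw. field. lra.
    + assert (Ha' : (a - 2 ^ K < 2 ^ K)%nat) by (simpl in Ha; lia).
      destruct (IH _ Ha') as [u [Hl Hw]]. exists (true :: u). simpl. split; [lia|].
      rewrite Hw, minus_INR by lia. rewrite pow_INR. replace (INR 2) with 2 by (simpl; ring). field. lra.
Qed.

Lemma no_true u : ~ In true u -> wval u = 0.
Proof. induction u as [|d u IH]; simpl; intros H; auto.
  destruct d; [exfalso; auto|]. rewrite IH by tauto. field. Qed.

Lemma no_false u : ~ In false u -> wval u + / 2 ^ length u = 1.
Proof. induction u as [|d u IH]; simpl; intros H. field.
  destruct d; [|exfalso; auto]. pose proof (p2pos (length u)).
  assert (E := IH (fun h => H (or_intror h))).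
  replace (/ (2 * 2 ^ length u)) with (/ 2 ^ length u / 2) by (field; lra).
  replace (wval u) with (1 - / 2 ^ length u) by lra. field. lra. Qed.

Lemma word_both K a : (0 < a)%nat -> (a + 1 < 2 ^ K)%nat ->
  exists u, length u = K /\ wval u = INR a / 2 ^ K /\ has_both_digits u.
Proof.
  intros H1 H2. destruct (word_exists K a) as [u [Hl Hw]]; [lia|].
  exists u. split; auto. split; auto. pose proof (p2pos K). split.
  - destruct (in_dec Bool.bool_dec true u) as [i|n]; auto. exfalso.
    apply no_true in n. rewrite Hw in n. apply lt_INR in H1. simpl in H1.
    assert (INR a = 0). { replace (INR a) with (INR a / 2 ^ K * 2 ^ K) by (field; lra). rewrite n. ring. }
    lra.
  - destruct (in_dec Bool.bool_dec false u) as [i|n]; auto. exfalso.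
    apply no_false in n. rewrite Hw, Hl in n. apply lt_INR in H2. rewrite plus_INR, pow_INR in H2.
    replace (INR 2) with 2 in H2 by (simpl; ring). simpl (INR 1) in H2.
    assert (INR a + 1 = 2 ^ K).
    { replace (INR a + 1) with ((INR a / 2 ^ K + / 2 ^ K) * 2 ^ K) by (field; lra). rewrite n. ring. }
    lra.
Qed.

Definition idout (f : fn) := forall x, (x < 0 \/ 1 < x) -> f x = x.
Definition gridM (f : fn) (K M : nat) := forall a, (a < 2 ^ K)%nat ->
  exists (z : Z) (L : nat), (M <= L)%nat /\
    forall x, Dr (INR a) K x -> f x = (x * 2 ^ K + IZR z) / 2 ^ L.
Definition G (f : fn) := idout f /\ f 0 = 0 /\ f 1 = 1 /\
  (forall x, 0 <= x <= 1 -> 0 <= f x <= 1) /\ exists K, gridM f K 0.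

Lemma lt_pow_R d n : (d < 2 ^ n)%nat -> INR d + 1 <= 2 ^ n.
Proof. intros H. rewrite <- S_INR. replace (2 ^ n) with (INR (2 ^ n)%nat).
  apply le_INR; lia. rewrite pow_INR. simpl. replace (1+1) with 2 by ring. auto. Qed.

Lemma pow_lt_R c n : INR c + 1 <= 2 ^ n -> (c < 2 ^ n)%nat.
Proof. intros H. rewrite <- S_INR in H. replace (2 ^ n) with (INR (2 ^ n)%nat) in H.
  apply INR_le in H. lia. rewrite pow_INR. simpl. replace (1+1) with 2 by ring. auto. Qed.

Lemma nest K j d : (d < 2 ^ (K + j))%nat -> exists b, (b < 2 ^ K)%nat /\
  forall x, Dr (INR d) (K + j) x -> Dr (INR b) K x.
Proof.
  intros Hd. apply lt_pow_R in Hd. pose proof (p2pos (K + j)).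
  assert (0 <= INR d) by apply pos_INR.
  set (y := (INR d + / 2) / 2 ^ (K + j)).
  assert (Hy : 0 <= y <= 1).
  { unfold y. split. apply div_le_r; auto; lra. apply div_le_l; auto; lra. }
  destruct (cover K y Hy) as [b [Hb Hby]]. exists b. split; auto.
  intros x Hx. rewrite INR_IZR_INZ. apply (mid_nest (Z.of_nat b) (Z.of_nat d) K j).
  rewrite <- !INR_IZR_INZ. exact Hby. rewrite <- INR_IZR_INZ. exact Hx.
Qed.

Lemma scale_aff x z K L j : (x * 2 ^ K + IZR z) / 2 ^ L =
  (x * 2 ^ (K + j) + IZR (z * Z.of_nat (2 ^ j)%nat)) / 2 ^ (L + j).
Proof. rewrite mult_IZR, IZR_pow2, !pow_add. pose proof (p2pos L). pose proof (p2pos j).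
  field. lra. Qed.

Lemma refine f K M j : gridM f K M -> gridM f (K + j) (M + j).
Proof.
  intros HG a Ha. destruct (nest K j a Ha) as [b [Hb Hn]].
  destruct (HG b Hb) as [z [L [HL Hf]]].
  exists (z * Z.of_nat (2 ^ j)%nat)%Z, (L + j)%nat. split; [lia|].
  intros x Hx. rewrite Hf by auto. apply scale_aff.
Qed.

Lemma Dr_aff r K L z x : Dr r K x -> Dr (r + IZR z) L ((x * 2 ^ K + IZR z) / 2 ^ L).
Proof. intros [H1 H2]. pose proof (p2pos K). pose proof (p2pos L).
  apply le_div_l in H1; auto. apply le_div_r in H2; auto. split.
  - unfold Rdiv. apply Rmult_le_compat_r. left; apply Rinv_0_lt_compat; auto. lra.
  - unfold Rdiv. apply Rmult_le_compat_r. left; apply Rinv_0_lt_compat; auto. lra. Qed.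

Lemma Dr_l r K : Dr r K (r / 2 ^ K).
Proof. pose proof (p2pos K). split. lra. unfold Rdiv. apply Rmult_le_compat_r.
  left; apply Rinv_0_lt_compat; auto. lra. Qed.
Lemma Dr_r r K : Dr r K ((r + 1) / 2 ^ K).
Proof. pose proof (p2pos K). split. 2: lra. unfold Rdiv. apply Rmult_le_compat_r.
  left; apply Rinv_0_lt_compat; auto. lra. Qed.

Lemma Dr_01 a K : (a < 2 ^ K)%nat -> forall x, Dr (INR a) K x -> 0 <= x <= 1.
Proof. intros Ha x [H1 H2]. apply lt_pow_R in Ha. pose proof (p2pos K).
  pose proof (pos_INR a). split.
  - apply le_div_l in H1; auto. nra.
  - apply le_div_r in H2; auto. nra. Qed.

Lemma G_comp f g : G f -> G g -> G (fun x => f (g x)).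
Proof.
  intros [fo [f0 [f1 [fm [Kf Hf]]]]] [go [g0 [g1 [gm [Kg Hg]]]]].
  split; [|split; [|split; [|split]]].
  - intros x Hx. rewrite go by auto. auto.
  - simpl. rewrite g0; auto.
  - simpl. rewrite g1; auto.
  - intros x Hx. apply fm, gm, Hx.
  - exists (Kg + Kf)%nat. pose proof (refine g Kg 0 Kf Hg) as Hg'. simpl in Hg'.
    intros d Hd. destruct (Hg' d Hd) as [z [L [HL Hgd]]].
    set (K' := (Kg + Kf)%nat) in *.
    pose proof (p2pos K'). pose proof (p2pos L).
    assert (E0 := gm _ (Dr_01 _ _ Hd _ (Dr_l (INR d) K'))).
    assert (E1 := gm _ (Dr_01 _ _ Hd _ (Dr_r (INR d) K'))).
    rewrite Hgd in E0 by apply Dr_l. rewrite Hgd in E1 by apply Dr_r.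
    replace (INR d / 2 ^ K' * 2 ^ K') with (INR d) in E0 by (field; lra).
    replace ((INR d + 1) / 2 ^ K' * 2 ^ K') with (INR d + 1) in E1 by (field; lra).
    set (c := (Z.of_nat d + z)%Z).
    assert (Ec : IZR c = INR d + IZR z) by (unfold c; rewrite plus_IZR, <- INR_IZR_INZ; auto).
    assert (c0 : (0 <= c)%Z).
    { apply le_IZR. rewrite Ec. destruct E0 as [E0 _]. apply le_div_r in E0; auto. lra. }
    set (cn := Z.to_nat c).
    assert (Ecn : INR cn = IZR c) by (unfold cn; rewrite INR_IZR_INZ, Z2Nat.id; auto).
    assert (cnlt : (cn < 2 ^ L)%nat).
    { apply pow_lt_R. rewrite Ecn, Ec. destruct E1 as [_ E1]. apply le_div_l in E1; auto. lra. }
    destruct (Nat.le_exists_sub Kf L HL) as [i [Hi _]].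
    rewrite Hi, Nat.add_comm in cnlt.
    destruct (nest Kf i cn cnlt) as [b [Hb Hbn]].
    destruct (Hf b Hb) as [w [M [_ Hfb]]].
    exists (z + w * Z.of_nat (2 ^ i)%nat)%Z, (i + M)%nat. split; [lia|].
    intros x Hx. rewrite Hgd by auto.
    assert (Hgx : Dr (INR b) Kf ((x * 2 ^ K' + IZR z) / 2 ^ L)).
    { apply Hbn. rewrite Nat.add_comm, <- Hi, Ecn, Ec. apply Dr_aff. auto. }
    rewrite Hfb by auto. rewrite Hi, plus_IZR, mult_IZR, IZR_pow2, !pow_add.
    pose proof (p2pos i). pose proof (p2pos M). pose proof (p2pos Kf). field. lra.
Qed.

Lemma nbound n (P : nat -> nat -> Prop) : (forall i, (i < n)%nat -> exists L, P i L) ->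
  exists N, forall i, (i < n)%nat -> exists L, (L <= N)%nat /\ P i L.
Proof.
  induction n as [|n IH]; intros H.
  - exists 0%nat. intros; lia.
  - destruct IH as [N HN]. intros i Hi; apply H; lia.
    destruct (H n) as [Ln HLn]; [lia|].
    exists (Nat.max N Ln). intros i Hi. destruct (Nat.eq_dec i n).
    + subst. exists Ln. split; auto; lia.
    + destruct (HN i) as [L [HL HP]]; [lia|]. exists L. split; auto; lia.
Qed.

Lemma G_inv a b : G a -> is_inv b a -> G b.
Proof.
  intros [ao [a0 [a1 [am [K Ha]]]]] Hinv.
  assert (bo : idout b).
  { intros x Hx. rewrite <- (ao x Hx) at 1. apply Hinv. }
  assert (bm : forall x, 0 <= x <= 1 -> 0 <= b x <= 1).
  { intros y Hy. destruct (Rle_lt_dec 0 (b y)); destruct (Rle_lt_dec (b y) 1); try lra;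
    exfalso; assert (E : a (b y) = b y) by (apply ao; lra);
    rewrite (proj2 (Hinv y)) in E; lra. }
  split; [auto|split; [|split; [|split; [auto|]]]].
  - rewrite <- a0 at 1. apply Hinv.
  - rewrite <- a1 at 1. apply Hinv.
  - destruct (nbound (2 ^ K)%nat (fun j L => exists z, forall x, Dr (INR j) K x ->
        a x = (x * 2 ^ K + IZR z) / 2 ^ L)) as [N HN].
    { intros j Hj. destruct (Ha j Hj) as [z [L [_ H]]]. exists L, z. auto. }
    exists N. intros d Hd.
    pose proof (p2pos N). pose proof (p2pos K).
    set (y0 := (INR d + / 2) / 2 ^ N).
    assert (Hy : 0 <= y0 <= 1).
    { apply lt_pow_R in Hd. pose proof (pos_INR d).
      unfold y0. split. apply div_le_r; auto; lra. apply div_le_l; auto; lra. }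
    destruct (cover K (b y0) (bm _ Hy)) as [j [Hj Hjx]].
    destruct (HN j Hj) as [L [HLN [z Hz]]].
    assert (Ey : a (b y0) = y0) by apply Hinv.
    pose proof (Dr_aff _ K L z _ Hjx) as HD. rewrite <- (Hz (b y0) Hjx) in HD. rewrite Ey in HD.
    destruct (Nat.le_exists_sub L N HLN) as [i [Hi _]]. rewrite Nat.add_comm in Hi.
    pose proof (p2pos L). pose proof (p2pos i).
    exists (- (z * Z.of_nat (2 ^ i)%nat))%Z, (K + i)%nat. split; [lia|].
    intros y Hyd.
    assert (Hyc : Dr (IZR (Z.of_nat j + z)) L y).
    { apply (mid_nest _ (Z.of_nat d) L i).
      - rewrite plus_IZR, <- !INR_IZR_INZ, <- Hi. exact HD.
      - rewrite <- INR_IZR_INZ, <- Hi. exact Hyd. }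
    rewrite plus_IZR, <- INR_IZR_INZ in Hyc.
    set (x := (y * 2 ^ L - IZR z) / 2 ^ K).
    assert (Hx : Dr (INR j) K x).
    { destruct Hyc as [Q1 Q2]. apply le_div_l in Q1; auto. apply le_div_r in Q2; auto.
      unfold x. split; unfold Rdiv; apply Rmult_le_compat_r;
        try (left; apply Rinv_0_lt_compat; auto); lra. }
    assert (Eax : a x = y). { rewrite (Hz x Hx). unfold x. field. lra. }
    replace (b y) with x by (rewrite <- Eax; symmetry; apply Hinv). unfold x.
    rewrite opp_IZR, mult_IZR, IZR_pow2, Hi, !pow_add. field. lra.
Qed.

Lemma dy_add x y : dyadic x -> dyadic y -> dyadic (x + y).
Proof. intros [a [k Ha]] [c [l Hc]]. subst.
  exists (a * Z.of_nat (2 ^ l)%nat + c * Z.of_nat (2 ^ k)%nat)%Z, (k + l)%nat.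
  rewrite plus_IZR, !mult_IZR, !IZR_pow2, pow_add. pose proof (p2pos k). pose proof (p2pos l).
  field. lra. Qed.
Lemma dy_mul x y : dyadic x -> dyadic y -> dyadic (x * y).
Proof. intros [a [k Ha]] [c [l Hc]]. subst. exists (a * c)%Z, (k + l)%nat.
  rewrite mult_IZR, pow_add. pose proof (p2pos k). pose proof (p2pos l). field. lra. Qed.
Lemma dy_opp x : dyadic x -> dyadic (- x).
Proof. intros [a [k Ha]]. subst. exists (- a)%Z, k. rewrite opp_IZR. pose proof (p2pos k).
  field. lra. Qed.
Lemma dy_pow m : dyadic (powerRZ 2 m).
Proof. destruct m as [|q|q]; simpl.
  - exists 1%Z, 0%nat. simpl. field.
  - exists (Z.of_nat (2 ^ Pos.to_nat q)%nat), 0%nat. rewrite IZR_pow2. simpl. field.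
  - exists 1%Z, (Pos.to_nat q). simpl. field. apply pow_nonzero. lra. Qed.

Lemma dy_ge x : dyadic x -> exists K0, forall K, (K0 <= K)%nat -> exists P, x = IZR P / 2 ^ K.
Proof. intros [a [k Ha]]. exists k. intros K HK. destruct (Nat.le_exists_sub k K HK) as [j [Hj _]].
  subst. exists (a * Z.of_nat (2 ^ j)%nat)%Z. rewrite mult_IZR, IZR_pow2, pow_add.
  pose proof (p2pos k). pose proof (p2pos j). field. lra. Qed.

Lemma aff_ge m bb : dyadic bb -> exists K0, forall K, (K0 <= K)%nat ->
  exists z L, forall x, powerRZ 2 m * x + bb = (x * 2 ^ K + IZR z) / 2 ^ L.
Proof.
  intros [be [B Hb]]. subst.
  assert (H1 : exists K1 z1 L1, forall x, powerRZ 2 m * x + IZR be / 2 ^ B = (x * 2 ^ K1 + IZR z1) / 2 ^ L1).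
  { pose proof (p2pos B). destruct m as [|q|q]; simpl.
    - exists B, be, B. intros x. field. lra.
    - exists (Pos.to_nat q + B)%nat, be, B. intros x. rewrite pow_add. field. lra.
    - exists B, (be * Z.of_nat (2 ^ Pos.to_nat q)%nat)%Z, (Pos.to_nat q + B)%nat. intros x.
      rewrite mult_IZR, IZR_pow2, pow_add. pose proof (p2pos (Pos.to_nat q)). field. lra. }
  destruct H1 as [K1 [z1 [L1 H1]]]. exists K1. intros K HK.
  destruct (Nat.le_exists_sub K1 K HK) as [j [Hj _]]. rewrite Nat.add_comm in Hj. subst.
  exists (z1 * Z.of_nat (2 ^ j)%nat)%Z, (L1 + j)%nat. intros x. rewrite H1. apply scale_aff.
Qed.

Lemma bound_ge n (Q : nat -> nat -> Prop) :
  (forall i, (i < n)%nat -> exists K0, forall K, (K0 <= K)%nat -> Q i K) ->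
  exists K, forall i, (i < n)%nat -> Q i K.
Proof. intros H. destruct (nbound n (fun i L => forall K, (L <= K)%nat -> Q i K) H) as [N HN].
  exists N. intros i Hi. destruct (HN i Hi) as [L [HL HQ]]. auto. Qed.

Lemma pieces (p : nat -> R) x : forall k, p 0%nat <= x <= p (S k) ->
  exists i, (i <= k)%nat /\ p i <= x <= p (S i).
Proof. induction k as [|k IH]; intros H.
  - exists 0%nat. split; auto.
  - destruct (Rle_lt_dec x (p (S k))).
    + destruct IH as [i [Hi Hx]]; [lra|]. exists i. split; auto.
    + exists (S k). split; auto. lra. Qed.

Lemma inF_G f : inF f -> G f.
Proof.
  intros [fo [f0 [f1 [n [p [m [b [p0 [pn [Hp Hf]]]]]]]]]].
  assert (n1 : (1 <= n)%nat). { destruct n; [rewrite p0 in pn; lra|lia]. }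
  assert (mono : forall k, (k <= n)%nat -> p 0%nat <= p k /\
            forall x, p 0%nat <= x <= p k -> f (p 0%nat) <= f x <= f (p k)).
  { induction k as [|k IH]; intros Hk.
    - split; [lra|]. intros x Hx. replace x with (p 0%nat) by lra. lra.
    - destruct IH as [IH1 IH2]; [lia|]. destruct (Hp k) as [Hlt _]; [lia|].
      pose proof (powerRZ_lt 2 (m k)). assert (0 < 2) by lra. specialize (H H0).
      assert (Hk1 : f (p k) <= f (p (S k))).
      { rewrite (Hf k ltac:(lia) (p k)) by lra. rewrite (Hf k ltac:(lia) (p (S k))) by lra. nra. }
      split; [lra|]. intros x Hx. destruct (Rle_lt_dec x (p k)).
      + specialize (IH2 x). lra.
      + assert (I2 := IH2 (p k) ltac:(lra)).
        assert (e1 : f x = powerRZ 2 (m k) * x + b k) by (apply Hf; [lia|lra]).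
        assert (e2 : f (p k) = powerRZ 2 (m k) * p k + b k) by (apply Hf; [lia|lra]).
        assert (e3 : f (p (S k)) = powerRZ 2 (m k) * p (S k) + b k) by (apply Hf; [lia|lra]).
        rewrite e1, e3. rewrite e2 in I2. split; nra. }
  assert (dyb : forall i, (i < n)%nat -> dyadic (b i)).
  { induction i as [|i IH]; intros Hi.
    - specialize (Hf 0%nat Hi 0). rewrite f0, p0 in Hf.
      assert (b 0%nat = 0). { rewrite (Hf ltac:(pose proof (Hp 0%nat Hi); lra)). ring. }
      rewrite H. exists 0%Z, 0%nat. simpl. field.
    - assert (E1 := Hf i ltac:(lia) (p (S i))). assert (E2 := Hf (S i) Hi (p (S i))).
      destruct (Hp i) as [Hl _]; [lia|]. destruct (Hp (S i)) as [Hl2 Hd]; [lia|].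
      assert (b (S i) = powerRZ 2 (m i) * p (S i) + b i + - (powerRZ 2 (m (S i)) * p (S i))).
      { rewrite <- E1 by lra. rewrite E2 by lra. ring. }
      rewrite H. apply dy_add; [apply dy_add|apply dy_opp]; try apply dy_mul; auto using dy_pow.
      apply IH; lia. }
  split; [auto|split; [auto|split; [auto|split]]].
  - intros x Hx. destruct (mono n ltac:(lia)) as [_ M]. rewrite p0, pn in M.
    rewrite f0, f1 in M. apply M. auto.
  - set (Q := fun i K => (exists P, p i = IZR P / 2 ^ K) /\ (exists P, p (S i) = IZR P / 2 ^ K) /\
        exists z L, forall x, powerRZ 2 (m i) * x + b i = (x * 2 ^ K + IZR z) / 2 ^ L).
    destruct (bound_ge n Q) as [K HK].
    { intros i Hi.
      assert (D1 : dyadic (p i)) by (apply Hp; auto).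
      assert (D2 : dyadic (p (S i))).
      { destruct (Nat.eq_dec (S i) n). rewrite e, pn. exists 1%Z, 0%nat. simpl. field.
        apply Hp; lia. }
      destruct (dy_ge _ D1) as [k1 H1]. destruct (dy_ge _ D2) as [k2 H2].
      destruct (aff_ge (m i) (b i) (dyb i Hi)) as [k3 H3].
      exists (k1 + k2 + k3)%nat. intros K HK. unfold Q. split; [|split].
      apply H1; lia. apply H2; lia. apply H3; lia. }
    exists K. intros a Ha. pose proof (p2pos K).
    assert (Ha' := lt_pow_R _ _ Ha). pose proof (pos_INR a).
    set (y := (INR a + / 2) / 2 ^ K).
    assert (Hy : p 0%nat <= y <= p (S (pred n))).
    { replace (S (pred n)) with n by lia. rewrite p0, pn. unfold y.
      split. apply div_le_r; auto; lra. apply div_le_l; auto; lra. }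
    destruct (pieces p y _ Hy) as [i [Hi Hyi]].
    assert (Hin : (i < n)%nat) by lia.
    destruct (HK i Hin) as [[P1 E1] [[P2 E2] [z [L Hz]]]].
    exists z, L. split; [lia|]. intros x Hx.
    assert (A1 : (P1 <= Z.of_nat a)%Z).
    { apply int_half. rewrite <- INR_IZR_INZ. destruct Hyi as [Q1 _]. rewrite E1 in Q1.
      unfold y in Q1. apply le_div_l in Q1; auto.
      replace ((INR a + / 2) / 2 ^ K * 2 ^ K) with (INR a + /2) in Q1 by (field; lra). lra. }
    assert (A2 : (Z.of_nat a + 1 <= P2)%Z).
    { apply int_half. rewrite plus_IZR, <- INR_IZR_INZ. destruct Hyi as [_ Q2]. rewrite E2 in Q2.
      unfold y in Q2. apply le_div_r in Q2; auto.
      replace ((INR a + / 2) / 2 ^ K * 2 ^ K) with (INR a + /2) in Q2 by (field; lra).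
      simpl (IZR 1). lra. }
    apply IZR_le in A1. apply IZR_le in A2. rewrite <- INR_IZR_INZ in A1.
    rewrite plus_IZR, <- INR_IZR_INZ in A2. simpl (IZR 1) in A2.
    assert (Hxi : p i <= x <= p (S i)).
    { destruct Hx as [X1 X2]. split.
      - rewrite E1. apply div_le_l; auto. apply le_div_l in X1; auto. nra.
      - rewrite E2. apply div_le_r; auto. apply le_div_r in X2; auto. nra. }
    rewrite (Hf i Hin x Hxi).
    apply Hz.
Qed.

Lemma choice2 n (P : nat -> Z -> nat -> Prop) :
  (forall a, (a < n)%nat -> exists z L, P a z L) ->
  exists zf Lf, forall a, (a < n)%nat -> P a (zf a) (Lf a).
Proof.
  induction n as [|n IH]; intros H.
  - exists (fun _ => 0%Z), (fun _ => 0%nat). intros; lia.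
  - destruct IH as [zf [Lf HP]]. intros a Ha; apply H; lia.
    destruct (H n) as [zn [Ln Hn]]; [lia|].
    exists (fun a => if Nat.eqb a n then zn else zf a), (fun a => if Nat.eqb a n then Ln else Lf a).
    intros a Ha. destruct (Nat.eqb_spec a n). subst; auto. apply HP; lia.
Qed.

Lemma INR2 : INR 2 = 2.
Proof. simpl; ring. Qed.

Lemma G_inF f : G f -> inF f.
Proof.
  intros [fo [f0 [f1 [fm [K HK]]]]].
  destruct (choice2 _ (fun a z L => forall x, Dr (INR a) K x -> f x = (x * 2 ^ K + IZR z) / 2 ^ L)
    (fun a Ha => match HK a Ha with ex_intro _ z (ex_intro _ L (conj _ H)) =>
        ex_intro _ z (ex_intro _ L H) end)) as [zf [Lf HP]].
  pose proof (p2pos K).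
  split; [exact fo|split; [exact f0|split; [exact f1|]]].
  exists (2 ^ K)%nat, (fun i => INR i / 2 ^ K), (fun i => (Z.of_nat K - Z.of_nat (Lf i))%Z),
    (fun i => IZR (zf i) / 2 ^ (Lf i)).
  split; [simpl; field; lra|split; [rewrite pow_INR, INR2; field; lra|split]].
  - intros i Hi. split. rewrite S_INR. unfold Rdiv. apply Rmult_lt_compat_r.
    apply Rinv_0_lt_compat; auto. lra. exists (Z.of_nat i), K. rewrite INR_IZR_INZ. auto.
  - intros i Hi x Hx. rewrite S_INR in Hx. rewrite (HP i Hi x Hx).
    unfold Z.sub. rewrite powerRZ_add by lra. rewrite powerRZ_neg', <- !pow_powerRZ.
    pose proof (p2pos (Lf i)). field. lra.
Qed.

Lemma inF_near0 f : inF f -> exists s d, 0 < s /\ 0 < d /\ forall x, 0 <= x <= d -> f x = s * x.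
Proof.
  intros [fo [f0 [f1 [n [p [m [b [p0 [pn [Hp Hf]]]]]]]]]].
  assert (n1 : (0 < n)%nat). { destruct n; [rewrite p0 in pn; lra|lia]. }
  destruct (Hp 0%nat n1) as [Hl _]. rewrite p0 in Hl.
  assert (E := Hf 0%nat n1 0). rewrite p0, f0 in E.
  assert (b0 : b 0%nat = 0). { rewrite (E ltac:(lra)). ring. }
  exists (powerRZ 2 (m 0%nat)), (p 1%nat). split; [apply powerRZ_lt; lra|split; [lra|]].
  intros x Hx. rewrite (Hf 0%nat n1 x) by (rewrite p0; lra). rewrite b0. ring.
Qed.

Lemma inF_near1 f : inF f -> exists s d, 0 < s /\ 0 < d /\ forall x, 0 <= x <= d -> 1 - f (1 - x) = s * x.
Proof.
  intros [fo [f0 [f1 [n [p [m [b [p0 [pn [Hp Hf]]]]]]]]]].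
  destruct n as [|k]; [rewrite p0 in pn; lra|].
  destruct (Hp k ltac:(lia)) as [Hl _]. rewrite pn in Hl.
  assert (E := Hf k ltac:(lia) 1). rewrite pn, f1 in E.
  assert (b1 : b k = 1 - powerRZ 2 (m k)). { rewrite (E ltac:(lra)). ring. }
  exists (powerRZ 2 (m k)), (1 - p k). split; [apply powerRZ_lt; lra|split; [lra|]].
  intros x Hx. rewrite (Hf k ltac:(lia) (1 - x)) by (rewrite pn; lra). rewrite b1. ring.
Qed.

Lemma near0 (f g fi gi : fn) s t df dg : 0 < s -> 0 < t -> 0 < df -> 0 < dg ->
  (forall x, 0 <= x <= df -> f x = s * x) -> (forall x, 0 <= x <= dg -> g x = t * x) ->
  is_inv fi f -> is_inv gi g ->
  exists e, 0 < e /\ forall x, 0 <= x <= e -> fi (gi (f (g x))) = x.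
Proof.
  intros Hs Ht Hdf Hdg Hf Hg Hfi Hgi.
  exists (Rmin (Rmin df dg) (Rmin (df / t) (dg / s))).
  split. { repeat apply Rmin_glb_lt; auto; apply Rdiv_lt_0_compat; auto. }
  intros x Hx.
  assert (X1 : x <= df) by (pose proof (Rmin_l (Rmin df dg) (Rmin (df / t) (dg / s))); pose proof (Rmin_l df dg); lra).
  assert (X2 : x <= dg) by (pose proof (Rmin_l (Rmin df dg) (Rmin (df / t) (dg / s))); pose proof (Rmin_r df dg); lra).
  assert (X3 : x <= df / t) by (pose proof (Rmin_r (Rmin df dg) (Rmin (df / t) (dg / s))); pose proof (Rmin_l (df/t) (dg/s)); lra).
  assert (X4 : x <= dg / s) by (pose proof (Rmin_r (Rmin df dg) (Rmin (df / t) (dg / s))); pose proof (Rmin_r (df/t) (dg/s)); lra).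
  apply le_div_r in X3; auto. apply le_div_r in X4; auto.
  rewrite (Hg x) by lra. rewrite (Hf (t * x)) by nra.
  replace (s * (t * x)) with (t * (s * x)) by ring.
  rewrite <- (Hg (s * x)) by nra. rewrite (proj1 (Hgi _)).
  rewrite <- (Hf x) by lra. apply Hfi.
Qed.

Definition Inj (f : fn) := forall x y, f x = f y -> x = y.
Definition Ends (f : fn) := exists e, 0 < e /\
  forall x, (0 <= x <= e \/ 1 - e <= x <= 1) -> f x = x.

Lemma r11 y : 1 - (1 - y) = y.
Proof. ring. Qed.

Lemma refl_inv g f : is_inv g f -> is_inv (fun x => 1 - g (1 - x)) (fun x => 1 - f (1 - x)).
Proof. intros H x. rewrite !r11. rewrite (proj1 (H _)), (proj2 (H _)). rewrite !r11. auto. Qed.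

Lemma comm_ends f g fi gi : inF f -> inF g -> is_inv fi f -> is_inv gi g ->
  Ends (fun x => fi (gi (f (g x)))).
Proof.
  intros Hf Hg Hfi Hgi.
  destruct (inF_near0 f Hf) as [s [df [Hs [Hdf Ef]]]].
  destruct (inF_near0 g Hg) as [t [dg [Ht [Hdg Eg]]]].
  destruct (near0 f g fi gi s t df dg Hs Ht Hdf Hdg Ef Eg Hfi Hgi) as [e1 [He1 E1]].
  destruct (inF_near1 f Hf) as [s' [df' [Hs' [Hdf' Ef']]]].
  destruct (inF_near1 g Hg) as [t' [dg' [Ht' [Hdg' Eg']]]].
  destruct (near0 _ _ _ _ s' t' df' dg' Hs' Ht' Hdf' Hdg' Ef' Eg' (refl_inv _ _ Hfi) (refl_inv _ _ Hgi))
    as [e2 [He2 E2]].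
  exists (Rmin e1 e2). split. apply Rmin_glb_lt; auto.
  pose proof (Rmin_l e1 e2). pose proof (Rmin_r e1 e2).
  intros x [Hx|Hx]. apply E1; lra.
  assert (E := E2 (1 - x) ltac:(lra)). simpl in E. rewrite !r11 in E.
  lra.
Qed.

Lemma G_id : G (fun x => x).
Proof.
  split; [intros x _; auto|split; [auto|split; [auto|split; [auto|]]]].
  exists 0%nat. intros a Ha. exists 0%Z, 0%nat. split; auto. intros x _. simpl. field.
Qed.

Lemma derived_inv f : derivedF f -> G f /\ Inj f /\ Ends f.
Proof.
  induction 1 as [f g fi gi Hf Hg Hfi Hgi| |a b _ [Ga [Ia Ea]] _ [Gb [Ib Eb]]|a b _ [Ga [Ia Ea]] Hinv].
  - assert (GF := inF_G f Hf). assert (GG := inF_G g Hg).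
    split; [|split].
    + apply (G_comp fi (fun x => gi (f (g x)))). apply (G_inv f); auto.
      apply (G_comp gi (fun x => f (g x))). apply (G_inv g); auto.
      apply G_comp; auto.
    + intros x y E.
      apply (f_equal f) in E. rewrite !(proj2 (Hfi _)) in E.
      apply (f_equal g) in E. rewrite !(proj2 (Hgi _)) in E.
      apply (f_equal fi) in E. rewrite !(proj1 (Hfi _)) in E.
      apply (f_equal gi) in E. rewrite !(proj1 (Hgi _)) in E. auto.
    + apply comm_ends; auto.
  - split; [apply G_id|split]. intros x y E; auto. exists 1. split; [lra|]. auto.
  - split; [apply G_comp; auto|split].
    + intros x y E. apply Ib, Ia, E.
    + destruct Ea as [e1 [He1 E1]]. destruct Eb as [e2 [He2 E2]].
      exists (Rmin e1 e2). split. apply Rmin_glb_lt; auto.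
      pose proof (Rmin_l e1 e2). pose proof (Rmin_r e1 e2).
      intros x Hx. rewrite (E2 x) by lra. apply E1. lra.
  - split; [apply (G_inv a); auto|split].
    + intros x y E. apply (f_equal a) in E. rewrite !(proj2 (Hinv _)) in E. auto.
    + destruct Ea as [e [He E]]. exists e. split; auto. intros x Hx.
      rewrite <- (E x Hx) at 1. apply Hinv.
Qed.

Lemma INR_le_pow N : INR N <= 2 ^ N.
Proof. induction N as [|N IH]. simpl; lra. rewrite S_INR. simpl.
  assert (1 <= 2 ^ N) by (apply pow_R1_Rle; lra). lra. Qed.

Lemma small_pow e : 0 < e -> exists j, / 2 ^ j <= e.
Proof.
  intros He. destruct (archimed (/ e)) as [A _].
  assert (Hu : (0 <= up (/ e))%Z).
  { apply le_IZR. pose proof (Rinv_0_lt_compat e He). simpl. lra. }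
  exists (Z.to_nat (up (/ e))).
  assert (E : INR (Z.to_nat (up (/ e))) = IZR (up (/ e))) by (rewrite INR_IZR_INZ, Z2Nat.id; auto).
  pose proof (INR_le_pow (Z.to_nat (up (/ e)))). rewrite E in H.
  pose proof (p2pos (Z.to_nat (up (/ e)))).
  set (P := 2 ^ Z.to_nat (up (/ e))) in *.
  assert (/ e < P) by lra.
  apply (Rmult_le_reg_l P); auto. rewrite Rinv_r by lra.
  assert (e * / e = 1) by (field; lra).
  assert (P * e > / e * e) by (apply Rmult_lt_compat_r; auto).
  lra.
Qed.

Lemma final (H : fn -> Prop) : subgroupF H ->
  (forall u v : list bool, has_both_digits u -> has_both_digits v ->
     exists h, H h /\ has_branches h u v) ->
  forall f, G f -> Inj f -> Ends f -> Cl H f.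
Proof.
  intros HS Hyp f Gf If [e [He Ee]].
  split; [apply G_inF; auto|].
  destruct Gf as [fo [f0 [f1 [fm [K0 HK0]]]]].
  destruct (small_pow e He) as [j Hj].
  set (K := (K0 + j)%nat).
  assert (HK : gridM f K (0 + j)) by (apply refine; auto).
  assert (Hsm : / 2 ^ K <= e).
  { unfold K. rewrite pow_add. pose proof (p2pos K0). pose proof (p2pos j).
    assert (1 <= 2 ^ K0) by (apply pow_R1_Rle; lra).
    assert (/ (2 ^ K0 * 2 ^ j) <= / 2 ^ j).
    { apply Rinv_le_contravar; auto. nra. }
    lra. }
  pose proof (p2pos K).
  exists (2 ^ K)%nat, (fun i => INR i / 2 ^ K).
  split; [simpl; field; lra|split; [rewrite pow_INR, INR2; field; lra|split]].
  { intros i Hi. rewrite S_INR. unfold Rdiv. apply Rmult_lt_compat_r.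
    apply Rinv_0_lt_compat; auto. lra. }
  intros i Hi. rewrite S_INR.
  destruct (Nat.eq_dec i 0) as [E0|N0].
  { exists (fun x => x). split; [apply (sub_id H HS)|]. intros x Hx. apply Ee. left.
    subst i. simpl in Hx. split; [lra|]. replace ((0 + 1) / 2 ^ K) with (/ 2 ^ K) in Hx by (field; lra).
    lra. }
  destruct (Nat.eq_dec (i + 1) (2 ^ K)) as [E1|N1].
  { exists (fun x => x). split; [apply (sub_id H HS)|]. intros x Hx. apply Ee. right.
    assert (EI : INR i + 1 = 2 ^ K) by (rewrite <- INR2, <- pow_INR, <- E1, plus_INR; auto).
    replace (INR i) with (2 ^ K - 1) in Hx by lra.
    replace ((2 ^ K - 1 + 1) / 2 ^ K) with 1 in Hx by (field; lra).
    replace ((2 ^ K - 1) / 2 ^ K) with (1 - / 2 ^ K) in Hx by (field; lra).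
    lra. }
  destruct (word_both K i ltac:(lia) ltac:(lia)) as [u [Hlu [Hwu Hbu]]].
  destruct (HK i Hi) as [z [L [_ Hz]]].
  pose proof (p2pos L).
  assert (Hd0 := Dr_01 _ _ Hi _ (Dr_l (INR i) K)).
  assert (Hd1 := Dr_01 _ _ Hi _ (Dr_r (INR i) K)).
  assert (E0 := fm _ Hd0). assert (E1 := fm _ Hd1).
  rewrite (Hz _ (Dr_l (INR i) K)) in E0. rewrite (Hz _ (Dr_r (INR i) K)) in E1.
  replace (INR i / 2 ^ K * 2 ^ K) with (INR i) in E0 by (field; lra).
  replace ((INR i + 1) / 2 ^ K * 2 ^ K) with (INR i + 1) in E1 by (field; lra).
  set (c := (Z.of_nat i + z)%Z).
  assert (Ec : IZR c = INR i + IZR z) by (unfold c; rewrite plus_IZR, <- INR_IZR_INZ; auto).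
  assert (c0 : (0 <= c)%Z).
  { apply le_IZR. rewrite Ec. destruct E0 as [E0 _]. apply le_div_r in E0; auto. lra. }
  set (cn := Z.to_nat c).
  assert (Ecn : INR cn = IZR c) by (unfold cn; rewrite INR_IZR_INZ, Z2Nat.id; auto).
  assert (cnlt : (cn < 2 ^ L)%nat).
  { apply pow_lt_R. rewrite Ecn, Ec. destruct E1 as [_ E1]. apply le_div_l in E1; auto. lra. }
  assert (cpos : (0 < cn)%nat).
  { destruct (Nat.eq_dec cn 0) as [e0|]; [|lia]. exfalso.
    assert (F : f (INR i / 2 ^ K) = f 0).
    { rewrite f0, (Hz _ (Dr_l (INR i) K)).
      replace (INR i / 2 ^ K * 2 ^ K) with (INR i) by (field; lra).
      rewrite <- Ec, <- Ecn, e0. simpl. field. lra. }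
    apply If in F. assert (INR i = 0).
    { replace (INR i) with (INR i / 2 ^ K * 2 ^ K) by (field; lra). rewrite F. ring. }
    apply N0. apply INR_eq. simpl. auto. }
  assert (clt : (cn + 1 < 2 ^ L)%nat).
  { destruct (Nat.eq_dec (cn + 1) (2 ^ L)) as [e1|]; [|lia]. exfalso.
    assert (EL : INR cn + 1 = 2 ^ L) by (rewrite <- INR2, <- pow_INR, <- e1, plus_INR; auto).
    assert (F : f ((INR i + 1) / 2 ^ K) = f 1).
    { rewrite f1, (Hz _ (Dr_r (INR i) K)).
      replace ((INR i + 1) / 2 ^ K * 2 ^ K) with (INR i + 1) by (field; lra).
      replace (INR i + 1 + IZR z) with (INR cn + 1) by lra. rewrite EL. field. lra. }
    apply If in F. assert (INR i + 1 = 2 ^ K).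
    { replace (INR i + 1) with ((INR i + 1) / 2 ^ K * 2 ^ K) by (field; lra). rewrite F. ring. }
    apply N1. apply INR_eq. rewrite plus_INR, pow_INR, INR2. auto. }
  destruct (word_both L cn cpos clt) as [v [Hlv [Hwv Hbv]]].
  destruct (Hyp u v Hbu Hbv) as [h [Hh Hbr]].
  exists h. split; auto. intros x Hx.
  assert (Hw : in_word u x).
  { unfold in_word. rewrite Hwu, Hlu. replace (INR i / 2 ^ K + / 2 ^ K) with ((INR i + 1) / 2 ^ K)
      by (field; lra). auto. }
  rewrite (Hbr x Hw), (Hz x Hx), Hwu, Hwv, Hlu, Hlv, Ecn, Ec. field. lra.
Qed.

Theorem lemma2p3 (H : fn -> Prop) :
  subgroupF H ->
  (forall u v : list bool, has_both_digits u -> has_both_digits v ->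
     exists h, H h /\ has_branches h u v) ->
  forall f, derivedF f -> Cl H f.
Proof.
  intros HS Hyp f Hd. destruct (derived_inv f Hd) as [Gf [If Ef]].
  apply final; auto.
Qed.
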